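(* Let $\boldsymbol{\mathcal{D}} = \begin{pmatrix}\boldsymbol{W}_p\\ \boldsymbol{U}_f \\ \boldsymbol{Y}_f\end{pmatrix}$ be a data matrix with full row rank and LQ decomposition as described in the context. For any $\boldsymbol{a}\in\mathbb{R}^\ell$, let $(\boldsymbol{\xi};\mathbf{u}_f;\mathbf{y}_f) := \boldsymbol{\mathcal{D}}\boldsymbol{a}$ and $\boldsymbol{\gamma}_i:=\boldsymbol{Q}_i\boldsymbol{a}$. Then \begin{align*} \|\boldsymbol{\gamma}_1\|_2^2 &= \|\boldsymbol{\xi}\|_{\left(\boldsymbol{W}_p\boldsymbol{W}_p^\top\right)^{-1}}^2,\\ \|\boldsymbol{\gamma}_2\|_2^2 &= \|\mathbf{u}_f-\boldsymbol{U}_f \boldsymbol{W}_p^+\boldsymbol{\xi}\|_{\boldsymbol{\mathcal{R}}_\text{reg}}^2,\\ \|\boldsymbol{\gamma}_3\|_2^2 &= \|\mathbf{y}_f-\hat{\mathbf{y}}_\text{SPC}(\boldsymbol{\xi}, \mathbf{u}_f)\|_{\boldsymbol{\mathcal{Q}}_\text{reg}}^2, \end{align*} where $\boldsymbol{\mathcal{R}}_\text{reg} :=\left(\boldsymbol{U}_f\left(\boldsymbol{I}-\boldsymbol{W}_p^+\boldsymbol{W}_p\right)\boldsymbol{U}_f^\top\right)^{-1}$, $\boldsymbol{\mathcal{Q}}_\text{reg} :=\left(\boldsymbol{Y}_f (\boldsymbol{I}-\boldsymbol{Z}^+\boldsymbol{Z}) \boldsymbol{Y}_f^\top\right)^{-1}$,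 $\boldsymbol{Z}:=\begin{pmatrix}\boldsymbol{W}_p\\ \boldsymbol{U}_f\end{pmatrix}$ and $\hat{\mathbf{y}}_\text{SPC}(\boldsymbol{\xi},\mathbf{u}_f) := \boldsymbol{Y}_f\boldsymbol{Z}^+\begin{pmatrix}\boldsymbol{\xi}\\ \mathbf{u}_f\end{pmatrix}$. Moreover, $\boldsymbol{\gamma}_4$ does not affect $(\boldsymbol{\xi},\mathbf{u}_f,\mathbf{y}_f)$.
   Context: $\boldsymbol{M}^+$ denotes the Moore–Penrose pseudoinverse and $\|\boldsymbol{x}\|_{\boldsymbol{M}}^2 := \boldsymbol{x}^\top\boldsymbol{M}\boldsymbol{x}$. Data: $m$ inputs, $p$ outputs, past horizon $N_p$, future horizon $N_f$, $L=N_p+N_f$, and $\ell$ data trajectories. The data matrix $\boldsymbol{\mathcal{D}}\in\mathbb{R}^{L(m+p)\times\ell}$ has blocks $\boldsymbol{W}_p\in\mathbb{R}^{N_p(m+p)\times\ell}$, $\boldsymbol{U}_f\in\mathbb{R}^{mN_f\times \ell}$, $\boldsymbol{Y}_f\in\mathbb{R}^{pN_f\times\ell}$ and is assumed to have full row rank. Its LQ decomposition is $\boldsymbol{\mathcal{D}} = \begin{pmatrix} \boldsymbol{L}_{11} & \boldsymbol{0} & \boldsymbol{0} & \boldsymbol{0} \\ \boldsymbol{L}_{21} & \boldsymbol{L}_{22} & \boldsymbol{0} & \boldsymbol{0} \\ \boldsymbol{L}_{31} & \boldsymbol{L}_{32} & \boldsymbol{L}_{33} & \boldsymbol{0} \end{pmatrix}\begin{pmatrix}\boldsymbol{Q}_1\\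 \boldsymbol{Q}_2\\ \boldsymbol{Q}_3\\ \boldsymbol{Q}_4\end{pmatrix}$, with non-singular square diagonal blocks $\boldsymbol{L}_{11},\boldsymbol{L}_{22},\boldsymbol{L}_{33}$ (of sizes matching $\boldsymbol{W}_p,\boldsymbol{U}_f,\boldsymbol{Y}_f$) and $\boldsymbol{Q}=\begin{pmatrix}\boldsymbol{Q}_1^\top & \boldsymbol{Q}_2^\top&\boldsymbol{Q}_3^\top&\boldsymbol{Q}_4^\top\end{pmatrix}^\top\in\mathbb{R}^{\ell\times\ell}$ orthogonal (so $\boldsymbol{Q}_i\boldsymbol{Q}_i^\top=\boldsymbol{I}$ and $\boldsymbol{Q}_i\boldsymbol{Q}_j^\top=\boldsymbol{0}$ for $i\ne j$). *)

(* Defs.v *)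
From HB Require Import structures.
From mathcomp Require Import all_boot all_order all_algebra.
Set Implicit Arguments. Unset Strict Implicit. Unset Printing Implicit Defensive.
Import Order.TTheory GRing.Theory Num.Theory.
Local Open Scope ring_scope.

(* X is the Moore--Penrose pseudoinverse of A: the four Penrose conditions
   (which characterize it uniquely). *)
Definition is_MP_pinv (R : realFieldType) (r c : nat)
    (A : 'M[R]_(r, c)) (X : 'M[R]_(c, r)) : Prop :=
  [/\ A *m X *m A = A, X *m A *m X = X,
      (A *m X)^T = A *m X & (X *m A)^T = X *m A].

Definition sqnorm (R : realFieldType) (n : nat) (x : 'cV[R]_n) : R :=
  \sum_(i < n) x i 0 ^+ 2.

Definition wsqnorm (R : realFieldType) (n : nat) (M : 'M[R]_n) (x : 'cV[R]_n) : R :=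
  (x^T *m M *m x) 0 0.

(* Main.v *)
Require Import Defs.
From HB Require Import structures.
From mathcomp Require Import all_boot all_order all_algebra.
Import Order.TTheory GRing.Theory Num.Theory.
Local Open Scope ring_scope.
Set Implicit Arguments.

Lemma proj_lem (R : realFieldType) (n l : nat) (A : 'M[R]_(n, l)) (X : 'M[R]_(l, n))
  (L : 'M[R]_n) (Q : 'M[R]_(n, l)) :
  A = L *m Q -> L \in unitmx -> Q *m Q^T = 1%:M ->
  A *m X *m A = A -> (X *m A)^T = X *m A -> X *m A = Q^T *m Q.
Proof.
move=> -> uL QQ h1 h2.
have h3 : Q *m (X *m (L *m Q)) = Q.
  have := congr1 (mulmx (invmx L)) h1.
  by rewrite !mulmxA mulVmx // !mul1mx.
have e : X *m (L *m Q) = Q^T *m (X *m L)^T.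
  by rewrite -{1}h2 mulmxA trmx_mul.
move: h3; rewrite e mulmxA QQ mul1mx => h3.
by rewrite h3.
Qed.

Lemma invmxM' (R : realFieldType) (n : nat) (A B : 'M[R]_n) :
  A \in unitmx -> B \in unitmx -> invmx (A *m B) = invmx B *m invmx A.
Proof.
move=> uA uB.
have uAB : A *m B \in unitmx by rewrite unitmx_mul uA.
have h : (A *m B) *m (invmx B *m invmx A) = 1%:M.
  by rewrite -mulmxA (mulmxA B) mulmxV // mul1mx mulmxV.
by rewrite -[LHS]mulmx1 -h mulmxA mulVmx // mul1mx.
Qed.

Lemma wsq_lem (R : realFieldType) (n : nat) (L : 'M[R]_n) (v : 'cV[R]_n) :
  L \in unitmx -> wsqnorm (invmx (L *m L^T)) (L *m v) = sqnorm v.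
Proof.
move=> uL.
have uLT : L^T \in unitmx by rewrite unitmx_tr.
rewrite /wsqnorm /sqnorm invmxM' // trmx_mul.
rewrite -!mulmxA mulKVmx // mulKmx // mxE.
by apply: eq_bigr => i _; rewrite mxE expr2.
Qed.

Lemma gram_lem (R : realFieldType) (n l : nat) (M : 'M[R]_(n, l)) (P : 'M[R]_l)
  (L : 'M[R]_n) (Q : 'M[R]_(n, l)) :
  P^T = P -> P *m P = P -> M *m (1%:M - P) = L *m Q -> Q *m Q^T = 1%:M ->
  M *m (1%:M - P) *m M^T = L *m L^T.
Proof.
move=> PT PP e QQ.
have h : (1%:M - P) = (1%:M - P) *m (1%:M - P)^T.
  rewrite linearB /= trmx1 PT mulmxBl mul1mx mulmxBr mulmx1 PP subrr subr0 //.
rewrite h mulmxA e -mulmxA -trmx_mul e trmx_mul mulmxA -(mulmxA L) QQ mulmx1.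
by [].
Qed.

Lemma projQ (R : realFieldType) (n l : nat) (Q : 'M[R]_(n, l)) :
  Q *m Q^T = 1%:M -> (Q^T *m Q)^T = Q^T *m Q /\ (Q^T *m Q) *m (Q^T *m Q) = Q^T *m Q.
Proof.
move=> QQ; split; first by rewrite trmx_mul trmxK.
by rewrite mulmxA -(mulmxA Q^T) QQ mulmx1.
Qed.

Lemma resid (R : realFieldType) (n1 n2 n l : nat) (M : 'M[R]_(n, l))
  (A : 'M[R]_(n, n1)) (B : 'M[R]_(n, n2)) (Q : 'M[R]_(n1, l)) (Q' : 'M[R]_(n2, l)) :
  M = A *m Q + B *m Q' -> Q *m Q^T = 1%:M -> Q' *m Q^T = 0 ->
  M *m (1%:M - Q^T *m Q) = B *m Q'.
Proof.
move=> eM QQ Q'Q.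
have MQ : M *m Q^T = A by rewrite eM mulmxDl -!mulmxA QQ Q'Q mulmx1 mulmx0 addr0.
by rewrite mulmxBr mulmx1 mulmxA MQ {1}eM addrAC subrr add0r.
Qed.

Unset Implicit Arguments.

Theorem corollary1 (R : realFieldType) (m p Np Nf l k : nat)
  (Wp : 'M[R]_(Np * (m + p), l)) (Uf : 'M[R]_(m * Nf, l)) (Yf : 'M[R]_(p * Nf, l))
  (L11 : 'M[R]_(Np * (m + p)))
  (L21 : 'M[R]_(m * Nf, Np * (m + p))) (L22 : 'M[R]_(m * Nf))
  (L31 : 'M[R]_(p * Nf, Np * (m + p))) (L32 : 'M[R]_(p * Nf, m * Nf))
  (L33 : 'M[R]_(p * Nf))
  (Q1 : 'M[R]_(Np * (m + p), l)) (Q2 : 'M[R]_(m * Nf, l))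
  (Q3 : 'M[R]_(p * Nf, l)) (Q4 : 'M[R]_(k, l))
  (Wpp : 'M[R]_(l, Np * (m + p)))
  (Zp : 'M[R]_(l, Np * (m + p) + m * Nf)) :
  (* full row rank of the data matrix *)
  row_free (col_mx Wp (col_mx Uf Yf)) ->
  (* LQ decomposition *)
  Wp = L11 *m Q1 ->
  Uf = L21 *m Q1 + L22 *m Q2 ->
  Yf = L31 *m Q1 + L32 *m Q2 + L33 *m Q3 ->
  L11 \in unitmx -> L22 \in unitmx -> L33 \in unitmx ->
  (* Q is an l x l orthogonal matrix *)
  (Np * (m + p) + (m * Nf + (p * Nf + k)))%N = l ->
  (let Q := col_mx Q1 (col_mx Q2 (col_mx Q3 Q4)) in Q *m Q^T = 1%:M) ->
  (* Moore--Penrose pseudoinverses of W_p and Z *)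
  is_MP_pinv Wp Wpp ->
  is_MP_pinv (col_mx Wp Uf) Zp ->
  forall a : 'cV[R]_l,
    let xi := Wp *m a in
    let uf := Uf *m a in
    let yf := Yf *m a in
    let Z := col_mx Wp Uf in
    let Rreg := invmx (Uf *m (1%:M - Wpp *m Wp) *m Uf^T) in
    let Qreg := invmx (Yf *m (1%:M - Zp *m Z) *m Yf^T) in
    let yspc := Yf *m Zp *m col_mx xi uf in
    [/\ sqnorm (Q1 *m a) = wsqnorm (invmx (Wp *m Wp^T)) xi,
        sqnorm (Q2 *m a) = wsqnorm Rreg (uf - Uf *m Wpp *m xi),
        sqnorm (Q3 *m a) = wsqnorm Qreg (yf - yspc) &
        (* gamma_4 does not affect (xi, uf, yf) *)
        forall a' : 'cV[R]_l,
          Q1 *m a' = Q1 *m a -> Q2 *m a' = Q2 *m a -> Q3 *m a' = Q3 *m a ->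
          [/\ Wp *m a' = xi, Uf *m a' = uf & Yf *m a' = yf]].
Proof.
move=> _ eW eU eY u11 u22 u33 _ QQ [pW1 _ _ pW4] [pZ1 _ _ pZ4] a.
move: QQ => /=; rewrite !tr_col_mx !mul_col_row !mul_mx_row !scalar_mx_block.
move=> /eq_block_mx [e11 e12 _ e2].
move/eq_block_mx: e2 => [e22 e23 e32 e3].
move/eq_block_mx: e3 => [e33 _ _ _].
move: e12; rewrite -!row_mx0 => /eq_row_mx [e12 /eq_row_mx [e13 _]].
move: e23; rewrite -row_mx0 => /eq_row_mx [e23 _].
have e21 : Q2 *m Q1^T = 0 by rewrite -[Q2]trmxK -trmx_mul e12 trmx0.
have e31 : Q3 *m Q1^T = 0 by rewrite -[Q3]trmxK -trmx_mul e13 trmx0.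
have e32' : Q3 *m Q2^T = 0 by rewrite -[Q3]trmxK -trmx_mul e23 trmx0.
pose Q12 := col_mx Q1 Q2.
have QQ12 : Q12 *m Q12^T = 1%:M.
  by rewrite /Q12 tr_col_mx mul_col_row e11 e12 e21 e22 -scalar_mx_block.
have Q3Q12 : Q3 *m Q12^T = 0 by rewrite /Q12 tr_col_mx mul_mx_row e31 e32' row_mx0.
have eZ : col_mx Wp Uf = block_mx L11 0 L21 L22 *m Q12.
  by rewrite /Q12 mul_block_col mul0mx addr0 -eW -eU.
have uL : block_mx L11 0 L21 L22 \in unitmx.
  by rewrite unitmxE det_lblock unitrM -!unitmxE u11 u22.
have PW : Wpp *m Wp = Q1^T *m Q1 by exact: proj_lem eW u11 e11 pW1 pW4.
have PZ : Zp *m col_mx Wp Uf = Q12^T *m Q12 by exact: proj_lem eZ uL QQ12 pZ1 pZ4.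
have [PW1 PW2] := projQ e11.
have [PZ1 PZ2] := projQ QQ12.
have rU : Uf *m (1%:M - Q1^T *m Q1) = L22 *m Q2 by exact: resid eU e11 e21.
have eY' : Yf = row_mx L31 L32 *m Q12 + L33 *m Q3 by rewrite /Q12 mul_row_col.
have rY : Yf *m (1%:M - Q12^T *m Q12) = L33 *m Q3 by exact: resid eY' QQ12 Q3Q12.
split.
- have -> : Wp *m Wp^T = L11 *m L11^T.
    by rewrite eW trmx_mul mulmxA -(mulmxA L11) e11 mulmx1.
  by rewrite eW -mulmxA wsq_lem.
- rewrite PW (gram_lem PW1 PW2 rU e22).
  have -> : Uf *m a - Uf *m Wpp *m (Wp *m a) = L22 *m (Q2 *m a).
    have -> : Uf *m a - Uf *m Wpp *m (Wp *m a) = Uf *m (1%:M - Wpp *m Wp) *m a.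
      by rewrite mulmxBr mulmx1 mulmxBl !mulmxA.
    by rewrite PW rU -mulmxA.
  by rewrite wsq_lem.
- rewrite PZ (gram_lem PZ1 PZ2 rY e33).
  have -> : Yf *m a - Yf *m Zp *m col_mx (Wp *m a) (Uf *m a) = L33 *m (Q3 *m a).
    have -> : Yf *m a - Yf *m Zp *m col_mx (Wp *m a) (Uf *m a) = Yf *m (1%:M - Zp *m col_mx Wp Uf) *m a.
      by rewrite -mul_col_mx mulmxBr mulmx1 mulmxBl !mulmxA.
    by rewrite PZ rY -mulmxA.
  by rewrite wsq_lem.
- move=> a' h1 h2 h3; split.
  + by rewrite eW -!mulmxA h1.
  + by rewrite eU !mulmxDl -!mulmxA h1 h2.
  + by rewrite eY !mulmxDl -!mulmxA h1 h2 h3.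
Qed.
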